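(* Let $x_0\in X$ and for $r\ge0$ let $P_r$ be the orthogonal projection of $\ell^2(X)$ onto $\ell^2(Q_r(x_0))=\{\psi\in\ell^2(X):\psi(x)=0\text{ for }x\notin Q_r(x_0)\}$. Let $e^{(r)}_1\le\dots\le e^{(r)}_{N_r}$ be the eigenvalues (with multiplicity) of $P_r\Delta P_r$ acting on the $N_r$-dimensional space $\ell^2(Q_r(x_0))$, and $\nu_r=\frac1{N_r}\sum_{s=1}^{N_r}\delta(e^{(r)}_s)$. Then $\nu_r$ converges weak-* as $r\to\infty$ to the measure $\mu=\sum_{r=0}^\infty(\frac1{N_r}-\frac1{N_{r+1}})\delta(\lambda_r)$.
   Context: $X$ is an infinite countable set, $\delta_x$ is the Kronecker delta at $x\in X$. $\mathbf n=(n_r)_{r\ge0}$ is a sequence of positive integers and $\mathbf P=(\mathcal P_r)_{r\ge0}$ a sequence of partitions of $X$ (elements of $\mathcal P_r$ are ''clusters of rank $r$''). $(X,\mathbf P,\mathbf n)$ is a hierarchical structure if: (i) $n_0=1$ and every cluster in $\mathcal P_0$ is a singleton; (ii) for $r\ge1$ every cluster in $\mathcal P_r$ is a disjoint union of exactly $n_r$ clusters of $\mathcal P_{r-1}$; (iii) any two points $x,y\in X$ lie in a common cluster of some rank. Set $N_r=\prod_{s=0}^r n_s$, let $Q_r(x)$ be the unique rank-$r$ cluster containing $x$, and $d(x,y)=\min\{r: y\in Q_r(x)\}$. The averaging operators $E_r$ on $\ell^2(X)$ are $(E_r\psi)(x)=\frac1{N_r}\sum_{d(x,y)\le r}\psi(y)$.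 Let $(p_r)_{r\ge1}$ be positive numbers with $\sum_{r\ge1}p_r=1$, set $p_0=0$, $\lambda_r=\sum_{s=0}^r p_s$, and $\Delta=\sum_{r=0}^\infty p_rE_r$. $\delta(\lambda)$ denotes the Dirac mass at $\lambda$. *)

(* Defs.v *)
From HB Require Import structures.
From mathcomp Require Import all_boot all_order all_algebra.
From mathcomp Require Import all_classical all_reals all_analysis.
Set Implicit Arguments. Unset Strict Implicit. Unset Printing Implicit Defensive.
Import Order.TTheory GRing.Theory Num.Theory.
Local Open Scope classical_set_scope.
Local Open Scope ring_scope.

Section Hier.
Variable X : countType.

Definition is_partition (Pr : set (set X)) : Prop :=
  (forall C, Pr C -> C !=set0) /\
  (forall C D, Pr C -> Pr D -> C `&` D !=set0 -> C = D) /\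
  (forall x, exists C, Pr C /\ C x).

Definition hierarchical (P : nat -> set (set X)) (n : nat -> nat) : Prop :=
  (forall r, (0 < n r)%N) /\
  (forall r, is_partition (P r)) /\
  n 0%N = 1%N /\ (forall C, P 0%N C -> exists x, C = [set x]) /\
  (* (ii) every rank-r cluster is the disjoint union of exactly n_r
     (distinct, hence disjoint) rank-(r-1) clusters *)
  (forall r, (0 < r)%N -> forall C, P r C ->
     exists f : nat -> set X,
       (forall i j, (i < n r)%N -> (j < n r)%N -> f i = f j -> i = j) /\
       (forall i, (i < n r)%N -> P r.-1 (f i)) /\
       C = \bigcup_(i in [set i | (i < n r)%N]) f i) /\
  (forall x y, exists r C, P r C /\ C x /\ C y).

Definition Nr (n : nat -> nat) (r : nat) : nat := (\prod_(0 <= s < r.+1) n s)%N.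

Definition Q (P : nat -> set (set X)) (r : nat) (x : X) : set X :=
  [set y | exists C, P r C /\ C x /\ C y].

(* d(x,y) = min { r : y \in Q_r(x) };  {y | d(x,y) <= r} *)
Definition ball_d (P : nat -> set (set X)) (r : nat) (x : X) : set X :=
  [set y | exists s, (s <= r)%N /\ Q P s x y].

Variable R : realType.

Definition Eop (P : nat -> set (set X)) (n : nat -> nat) (r : nat)
  (psi : X -> R) (x : X) : R :=
  ((Nr n r)%:R)^-1 * \sum_(y \in ball_d P r x) psi y.

Definition Delta (P : nat -> set (set X)) (n : nat -> nat) (p : nat -> R)
  (psi : X -> R) (x : X) : R :=
  limn (fun m => \sum_(0 <= r < m) p r * Eop P n r psi x).

Definition kdelta (y : X) : X -> R := fun x => if x == y then 1 else 0.

(* matrix of P_r Delta P_r on l^2(Q_r(x0)) in the orthonormal basis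
   (delta_{s_i})_i, where s enumerates Q_r(x0) without repetition *)
Definition compr_mx (P : nat -> set (set X)) (n : nat -> nat) (p : nat -> R)
  (s : seq X) : 'M[R]_(size s) :=
  \matrix_(i < size s, j < size s)
     Delta P n p (kdelta (tnth (in_tuple s) j)) (tnth (in_tuple s) i).
End Hier.

(* Main.v *)
Require Import Defs.
From HB Require Import structures.
From mathcomp Require Import all_boot all_order all_algebra.
From mathcomp Require Import all_classical all_reals all_analysis.
From mathcomp Require Import zify ring lra.
Import Order.TTheory GRing.Theory Num.Theory numFieldNormedType.Exports.
Local Open Scope classical_set_scope.
Local Open Scope ring_scope.

Set Implicit Arguments. Unset Strict Implicit. Unset Printing Implicit Defensive.

Section LA.
Variable F : fieldType.

Lemma char_poly_conjV (n : nat) (V A : 'M[F]_n) : V \in unitmx ->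
  char_poly (invmx V *m A *m V) = char_poly A.
Proof.
move=> Vu.
set Vi' := map_mx (@polyC F) (invmx V).
set V' := map_mx (@polyC F) V.
have ViV : Vi' *m V' = 1%:M by rewrite -map_mxM mulVmx // map_mx1.
rewrite /char_poly.
have -> : char_poly_mx (invmx V *m A *m V) = Vi' *m char_poly_mx A *m V'.
  rewrite /char_poly_mx !map_mxM -/Vi' -/V' mulmxBr mulmxBl -!mulmxA.
  by rewrite mul_scalar_mx -scalemxAr ViV scalemx1.
by rewrite !det_mulmx mulrAC -det_mulmx ViV det1 mul1r.
Qed.



Section Spec.
Variables (n K : nat) (M : 'M[F]_n.+1) (mu : 'I_K -> F) (Pi : 'I_K -> 'M[F]_n.+1).
Hypothesis PiPi : forall k l, Pi k *m Pi l = if k == l then Pi k else 0.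
Hypothesis sumPi : \sum_k Pi k = 1%:M.
Hypothesis HM : M = \sum_k mu k *: Pi k.

Lemma comb_mul (a b : 'I_K -> F) :
  (\sum_k a k *: Pi k) *m (\sum_l b l *: Pi l) = \sum_k (a k * b k) *: Pi k.
Proof.
rewrite mulmx_suml; apply: eq_bigr => k _.
rewrite mulmx_sumr (bigD1 k) //= big1 ?addr0.
  by rewrite -scalemxAl -scalemxAr PiPi eqxx scalerA.
move=> l lk; rewrite -scalemxAl -scalemxAr PiPi eq_sym (negbTE lk).
by rewrite !scaler0.
Qed.

Lemma horner_spec g : horner_mx M g = \sum_k g.[mu k] *: Pi k.
Proof.
elim/poly_ind: g => [|g c IH].
  by rewrite rmorph0; symmetry; apply: big1 => k _; rewrite horner0 scale0r.
rewrite rmorphD rmorphM /= horner_mx_X horner_mx_C IH -mulmxE HM comb_mul.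
rewrite -[c%:M]scalemx1 -sumPi scaler_sumr -big_split; apply: eq_bigr => k _.
by rewrite hornerMXaddC scalerDl.
Qed.


Lemma spectral_sum (e : seq F) (h : F -> F) :
  injective mu -> char_poly M = \prod_(a <- e) ('X - a%:P) ->
  \sum_(a <- e) h a = \sum_k \tr (Pi k) * h (mu k).
Proof.
move=> mu_inj He.
set rs := [seq mu k | k <- enum 'I_K].
have urs : uniq rs by rewrite (map_inj_uniq mu_inj) enum_uniq.
set q := \prod_(x <- rs) ('X - x%:P).
have hq : horner_mx M q = 0.
  rewrite horner_spec; apply: big1 => k _.
  have : root q (mu k) by rewrite root_prod_XsubC map_f // mem_enum.
  by move/eqP => ->; rewrite scale0r.
have [P Pu] := (diagonalizableP M).2 (ex_intro2 _ _ rs urs (mxminpoly_min hq)).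
move=> /(similar_diagLR Pu) [D]; rewrite conjVmx // => HD.
have cp : char_poly M = \prod_(i < n.+1) ('X - (D 0 i)%:P).
  rewrite HD char_poly_conjV // char_poly_trig ?diag_mx_is_trig //.
  by apply: eq_bigr => i _; rewrite mxE eqxx mulr1n.
have pe : perm_eq e [seq D 0 i | i <- enum 'I_n.+1].
  by apply: prod_XsubC_eq; rewrite -He cp big_map big_enum.
pose ell k := \prod_(j | j != k) ('X - (mu j)%:P).
have ell0 k l : l != k -> (ell k).[mu l] = 0.
  by move=> lk; rewrite horner_prod (bigD1 l) //= hornerXsubC subrr mul0r.
have ellk k : (ell k).[mu k] != 0.
  rewrite horner_prod; apply/prodf_neq0 => j jk.
  by rewrite hornerXsubC subr_eq0; apply: contra jk => /eqP /mu_inj ->.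
pose G := \sum_k (h (mu k) / (ell k).[mu k]) *: ell k.
have GE l : G.[mu l] = h (mu l).
  rewrite horner_sum (bigD1 l) //= big1 ?addr0.
    by rewrite hornerZ divfK.
  by move=> k kl; rewrite hornerZ (ell0 k l) ?mulr0 // eq_sym.
have inrs a : a \in e -> exists k, a = mu k.
  move=> ae; have : root (char_poly M) a by rewrite He root_prod_XsubC.
  rewrite -root_mxminpoly => /(root_dvdp (mxminpoly_min hq)).
  by rewrite root_prod_XsubC => /mapP [k _ ->]; exists k.
transitivity (\sum_(a <- e) G.[a]).
  apply: eq_big_seq => a ae; have [k ->] := inrs a ae; by rewrite GE.
rewrite (perm_big _ pe) /= big_map big_enum /=.
transitivity (\tr (horner_mx (diag_mx D) G)).
  by rewrite horner_mx_diag mxtrace_diag; apply: eq_bigr => i _; rewrite mxE.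
transitivity (\tr (horner_mx M G)).
  by rewrite HD horner_mx_uconjC // mxtrace_mulC mulmxA mulmxV // mul1mx.
rewrite horner_spec raddf_sum /=; apply: eq_bigr => k _.
by rewrite mxtraceZ GE mulrC.
Qed.
End Spec.


Lemma spectral_sum' (N K : nat) (M : 'M[F]_N) (mu : 'I_K -> F)
  (Pi : 'I_K -> 'M[F]_N) (e : seq F) (h : F -> F) : (0 < N)%N ->
  (forall k l, Pi k *m Pi l = if k == l then Pi k else 0) ->
  \sum_k Pi k = 1%:M -> M = \sum_k mu k *: Pi k ->
  injective mu -> char_poly M = \prod_(a <- e) ('X - a%:P) ->
  \sum_(a <- e) h a = \sum_k \tr (Pi k) * h (mu k).
Proof.
case: N M Pi => [//|N] M Pi _ PiPi sumPi HM muinj He.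
exact: (spectral_sum PiPi sumPi HM).
Qed.

Lemma tele_B (N r : nat) (B : nat -> 'M[F]_N) (p : nat -> F) :
  \sum_(k < r) (\sum_(0 <= t < k.+1) p t) *: (B k - B k.+1) =
  \sum_(0 <= t < r) p t *: B t - (\sum_(0 <= t < r) p t) *: B r.
Proof.
elim: r => [|r IH]; first by rewrite big_ord0 big_geq // big_geq // scale0r subr0.
rewrite big_ord_recr /= IH !big_nat_recr //=.
apply/matrixP => i j; rewrite !(mxE, summxE).
set A := \sum_(_ <= _ < _ ) _; set L := \sum_(_ <= _ < _ ) _.
ring.
Qed.

Ltac mx := repeat match goal with |- context [maxn ?a ?b] =>
  first [have -> : maxn a b = a by lia | have -> : maxn a b = b by lia] end.

Lemma orthoB (N r : nat) (B : nat -> 'M[F]_N) :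
  (forall a b, (a <= r)%N -> (b <= r)%N -> B a *m B b = B (maxn a b)) ->
  forall k l : 'I_r.+1,
  (if (k < r)%N then B k - B k.+1 else B r) *m
  (if (l < r)%N then B l - B l.+1 else B r) =
  if k == l then (if (k < r)%N then B k - B k.+1 else B r) else 0.
Proof.
move=> BB k l; have kr := ltn_ord k; have lr := ltn_ord l.
case: (ltnP k r) => hk; case: (ltnP l r) => hl.
- rewrite mulmxBl !mulmxBr !BB; try lia.
  case: (ltngtP k l) => hkl; mx.
  + have -> : (k == l) = false by apply/negbTE; rewrite -val_eqE /=; lia.
    by rewrite subrr.
  + have -> : (k == l) = false by apply/negbTE; rewrite -val_eqE /=; lia.
    by rewrite subrr subrr subr0.
  + have -> : (k == l) = true by apply/eqP/val_inj.
    by rewrite hkl subrr subr0.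
- rewrite mulmxBl !BB; try lia; mx.
  have -> : (k == l) = false by apply/negbTE; rewrite -val_eqE /=; lia.
  by rewrite subrr.
- rewrite mulmxBr !BB; try lia; mx.
  have -> : (k == l) = false by apply/negbTE; rewrite -val_eqE /=; lia.
  by rewrite subrr.
- rewrite BB ?maxnn //; have -> : (k == l) = true by apply/eqP/val_inj => /=; lia.
  done.
Qed.
End LA.

Section Comb.
Variables (X : countType) (P : nat -> set (set X)) (n : nat -> nat).
Hypothesis hP : hierarchical P n.

Lemma part_eq r C D x : P r C -> P r D -> C x -> D x -> C = D.
Proof.
case: hP => _ [part _] PC PD Cx Dx.
by have [_ [disj _]] := part r; apply: disj => //; exists x.
Qed.

Lemma part_cover r x : exists C, P r C /\ C x.
Proof. by case: hP => _ [part _]; have [_ [_ cov]] := part r; apply: cov. Qed.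

Lemma QE r C x : P r C -> C x -> Q P r x = C.
Proof.
move=> PC Cx; apply/seteqP; split => y /=.
  by case=> D [PD [Dx Dy]]; rewrite (part_eq PC PD Cx Dx).
by move=> Cy; exists C.
Qed.

Lemma Qcl r x : P r (Q P r x).
Proof. by have [C [PC Cx]] := part_cover r x; rewrite (QE PC Cx). Qed.

Lemma Qrefl r x : Q P r x x.
Proof. by have [C [PC Cx]] := part_cover r x; exists C. Qed.

Lemma Qsym r x y : Q P r x y -> Q P r y x.
Proof. by case=> C [PC [Cx Cy]]; exists C. Qed.

Lemma Qtrans r x y z : Q P r x y -> Q P r y z -> Q P r x z.
Proof.
case=> C [PC [Cx Cy]] [D [PD [Dy Dz]]]; exists C; split => //; split => //.
by rewrite (part_eq PC PD Cy Dy).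
Qed.

Lemma QS r x y : Q P r x y -> Q P r.+1 x y.
Proof.
case: (hP) => _ [_ [_ [_ [split _]]]] [C [PC [Cx Cy]]].
have [D [PD Dx]] := part_cover r.+1 x.
have [f [_ [Pf DE]]] := split r.+1 isT D PD.
move: (Dx); rewrite DE => -[i /= ilt fix_].
have Cf : C = f i by apply: (part_eq PC (Pf i ilt) Cx fix_).
exists D; split => //; split => //; rewrite DE; exists i => //; by rewrite -Cf.
Qed.

Lemma Qmono r t x y : (r <= t)%N -> Q P r x y -> Q P t x y.
Proof.
move=> /subnK <-; elim: (t - r)%N => [//|k IH] /IH; rewrite addSn; exact: QS.
Qed.

Lemma Q0 x y : Q P 0 x y -> x = y.
Proof.
case: (hP) => _ [_ [_ [P0 _]]] [C [PC [Cx Cy]]].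
by have [z Cz] := P0 C PC; move: Cx Cy; rewrite Cz /= => -> ->.
Qed.

Lemma NrS r : Nr n r.+1 = (Nr n r * n r.+1)%N.
Proof. by rewrite /Nr big_nat_recr. Qed.

Lemma Nr0 : Nr n 0 = 1%N.
Proof. by case: hP => _ [_ [n0 _]]; rewrite /Nr big_nat1. Qed.

Lemma Nr_gt0 r : (0 < Nr n r)%N.
Proof.
case: hP => npos _; elim: r => [|r IH]; first by rewrite Nr0.
by rewrite NrS muln_gt0 IH npos.
Qed.

Lemma count_sum (S : seq X) (a : pred X) (K : nat) (b : 'I_K -> pred X) :
  (forall y, a y = \sum_(i < K) b i y :> nat)%N ->
  (count a S = \sum_(i < K) count (b i) S)%N.
Proof.
move=> ab; elim: S => [|y S IH] /=; first by rewrite big1.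
by rewrite IH ab -big_split.
Qed.

Lemma card_cluster r C (S : seq X) : P r C -> uniq S ->
  (count (fun y => `[< C y >]) S <= Nr n r)%N /\
  ((forall y, C y -> y \in S) -> count (fun y => `[< C y >]) S = Nr n r).
Proof.
elim: r C => [|r IH] C PC uS.
  case: (hP) => _ [_ [_ [P0 _]]]; have [z Cz] := P0 C PC; rewrite Nr0 Cz.
  have -> : count (fun y => `[< [set z] y >]) S = count_mem z S.
    by apply: eq_count => y; apply/asboolP/eqP.
  rewrite count_uniq_mem // leq_b1; split => // zS.
  by rewrite zS //.
case: (hP) => _ [_ [_ [_ [split _]]]].
have [f [finj [Pf DE]]] := split r.+1 isT C PC.
have cE : count (fun y => `[< C y >]) S =
   (\sum_(i < n r.+1) count (fun y => `[< f i y >]) S)%N.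
  apply: count_sum => y; case: (asboolP (C y)) => Cy.
    move: (Cy); rewrite DE => -[i /= ilt fiy].
    rewrite (bigD1 (Ordinal ilt)) //= big1 ?addn0; first by case: asboolP.
    move=> j jne; case: asboolP => // fjy; exfalso; move: jne.
    have := part_eq (Pf j (ltn_ord j)) (Pf i ilt) fjy fiy.
    by move=> /(finj _ _ (ltn_ord j) ilt) eji; rewrite -val_eqE /= eji eqxx.
  rewrite big1 // => i _; case: asboolP => // fiy; exfalso; apply: Cy.
  by rewrite DE; exists i => //=; exact: ltn_ord.
rewrite cE NrS; split.
  apply: (@leq_trans (\sum_(i < n r.+1) Nr n r)%N).
    by apply: leq_sum => i _; apply: (IH _ (Pf i (ltn_ord i)) uS).1.
  by rewrite sum_nat_const card_ord mulnC.
move=> CS; rewrite (_ : (Nr n r * n r.+1 = \sum_(i < n r.+1) Nr n r)%N); last first.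
  by rewrite sum_nat_const card_ord mulnC.
apply: eq_bigr => i _; apply: (IH _ (Pf i (ltn_ord i)) uS).2 => y fy.
by apply: CS; rewrite DE; exists i => //=; exact: ltn_ord.
Qed.

End Comb.

Section Mat.
Variables (R : realType) (X : countType) (P : nat -> set (set X)) (n : nat -> nat)
  (p : nat -> R).
Hypothesis hP : hierarchical P n.
Hypothesis p0 : p 0%N = 0.
Hypothesis ppos : forall r, (0 < r)%N -> 0 < p r.
Hypothesis psum : (fun m => \sum_(0 <= r < m) p r) @ \oo --> (1 : R).

Lemma ballE t x z : ball_d P t x z <-> Q P t x z.
Proof.
split; first by case=> s [st Qs]; apply: (Qmono hP st).
by move=> Qt; exists t.
Qed.

Lemma Eop_kdelta t x y : Eop P n t (kdelta R y) x =
  if `[< Q P t x y >] then (Nr n t)%:R^-1 else 0.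
Proof.
rewrite /Eop; case: asboolP => h.
  rewrite -(fsbig_widen [set y] (ball_d P t x) (kdelta R y)).
  - by rewrite fsbig_set1 /kdelta eqxx mulr1.
  - by move=> z /= ->; apply/ballE.
  - by move=> z [_ /= zy]; rewrite /kdelta; case: eqP.
rewrite fsbig1 ?mulr0 // => z /ballE Qz; rewrite /kdelta; case: eqP => // zy.
by exfalso; apply: h; rewrite -zy.
Qed.

Lemma p_ge0 t : 0 <= p t.
Proof. by case: t => [|t]; [rewrite p0 | apply/ltW/ppos]. Qed.


Definition ps m := \sum_(0 <= t < m) p t.
Definition w t := p t / (Nr n t)%:R.
Definition ws m := \sum_(0 <= t < m) w t.
Definition W := limn ws.

Lemma sum_nondecr (u : nat -> R) : (forall t, 0 <= u t) ->
  nondecreasing_seq (fun m => \sum_(0 <= t < m) u t).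
Proof.
move=> u0 a b ab; rewrite (big_cat_nat (leq0n a) ab) /= lerDl.
by apply: sumr_ge0 => t _.
Qed.

Lemma ps_le1 m : ps m <= 1.
Proof.
have nd : nondecreasing_seq ps by apply: sum_nondecr; exact: p_ge0.
have := nondecreasing_cvgn_le nd (cvgP _ psum) m.
by rewrite (cvg_lim _ psum).
Qed.

Lemma w_ge0 t : 0 <= w t.
Proof. by rewrite /w divr_ge0 ?p_ge0. Qed.

Lemma w_le t : w t <= p t.
Proof.
rewrite /w ler_pdivrMr ?ltr0n ?(Nr_gt0 hP) // ler_peMr ?p_ge0 //.
by rewrite ler1n (Nr_gt0 hP).
Qed.

Lemma ws_nd : nondecreasing_seq ws.
Proof. by apply: sum_nondecr; exact: w_ge0. Qed.

Lemma cvg_ws : cvgn ws.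
Proof.
apply: nondecreasing_is_cvgn; first exact: ws_nd.
exists 1 => _ [m _ <-]; apply: le_trans (ps_le1 m).
by apply: ler_sum => t _; apply: w_le.
Qed.

Lemma ws_le_W m : ws m <= W.
Proof. exact: nondecreasing_cvgn_le ws_nd cvg_ws m. Qed.

Lemma Delta_kdelta r x y : Q P r x y ->
  Delta P n p (kdelta R y) x =
  \sum_(0 <= t < r) (p t * (if `[< Q P t x y >] then (Nr n t)%:R^-1 else 0) - w t) + W.
Proof.
move=> Qr; rewrite /Delta; apply: cvg_lim; first exact: norm_hausdorff.
pose D := \sum_(0 <= t < r) (p t * (if `[< Q P t x y >] then (Nr n t)%:R^-1 else 0) - w t).
have : (fun m => D + ws m) @ \oo --> D + W.
  by apply: cvgD; [exact: cvg_cst | exact: cvg_ws].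
move=> HD; apply: cvg_trans HD; apply: near_eq_cvg.
exists r => // m /= rm.
under eq_bigr do rewrite Eop_kdelta.
rewrite (_ : \sum_(0 <= i < m) _ = \sum_(0 <= i < m)
   (p i * (if `[< Q P i x y >] then (Nr n i)%:R^-1 else 0) - w i) + ws m);
  last by rewrite /ws -big_split /=; apply: eq_bigr => t _; rewrite subrK.
congr (_ + _); rewrite (big_cat_nat (leq0n r) rm) /=.
rewrite [X in _ = _ + X]big1_seq ?addr0 // => t /andP [_].
rewrite mem_index_iota => /andP [rt _].
have -> : `[< Q P t x y >] = true by apply/asboolP; exact: (@Qmono _ _ _ hP r t x y rt Qr).
by rewrite /w subrr.
Qed.


Lemma sum_ind (T : eqType) (S : seq T) (a : pred T) (c : R) :
  \sum_(y <- S) (if a y then c else 0) = (count a S)%:R * c.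
Proof.
elim: S => [|y S IH]; first by rewrite big_nil mul0r.
by rewrite big_cons IH /= natrD mulrDl; case: (a y); rewrite ?mul1r ?mul0r ?add0r.
Qed.

Section Mat2.
Variables (r : nat) (x0 : X) (S : seq X).
Hypothesis uS : uniq S.
Hypothesis SQ : [set x | x \in S] = Q P r x0.

Let sx := tnth (in_tuple S).
Let N := size S.

Lemma inSP y : y \in S <-> Q P r x0 y.
Proof. by rewrite -SQ. Qed.

Lemma sx_in i : Q P r x0 (sx i).
Proof. by apply/inSP; apply: mem_tnth. Qed.

Lemma countQ t x : (t <= r)%N -> Q P r x0 x ->
  count (fun y => `[< Q P t x y >]) S = Nr n t.
Proof.
move=> tr Qx; apply: (card_cluster hP (Qcl hP t x) uS).2 => y Qy.
apply/inSP; apply: (Qtrans hP Qx); exact: (Qmono hP tr Qy).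
Qed.

Lemma sizeS : N = Nr n r.
Proof.
rewrite /N -(count_predT S) -(countQ (leqnn r) (Qrefl hP r x0)).
by apply: eq_in_count => y /inSP Qy; apply/esym/asboolP.
Qed.

Definition B t : 'M[R]_N :=
  \matrix_(i, j) (if `[< Q P t (sx i) (sx j) >] then (Nr n t)%:R^-1 else 0).

Lemma sum_ord_seq (F : X -> R) : \sum_(m < N) F (sx m) = \sum_(y <- S) F y.
Proof. by rewrite [RHS]big_tnth. Qed.

Lemma Nr_neq0 t : (Nr n t)%:R != 0 :> R.
Proof. by rewrite pnatr_eq0 -lt0n (Nr_gt0 hP). Qed.

Lemma BB t u : (t <= u <= r)%N -> B t *m B u = B u /\ B u *m B t = B u.
Proof.
move=> /andP [tu ur]; have tr := leq_trans tu ur.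
split; apply/matrixP => i j; rewrite !mxE.
- transitivity (\sum_(m < N) (if `[< Q P t (sx i) (sx m) >] then
     (if `[< Q P u (sx i) (sx j) >] then (Nr n t)%:R^-1 * (Nr n u)%:R^-1 else 0 : R)
     else 0)).
    apply: eq_bigr => m _; rewrite !mxE.
    case: (asboolP (Q P t (sx i) (sx m))) => h; last by rewrite mul0r.
    have E : Q P u (sx m) (sx j) <-> Q P u (sx i) (sx j).
      have hu := Qmono hP tu h.
      split => H; [exact (Qtrans hP hu H) | exact (Qtrans hP (Qsym hu) H)].
    case: (asboolP (Q P u (sx i) (sx j))) => h2.
      by rewrite asboolT //; apply/E.
    by rewrite asboolF ?mulr0 // => /E.
  rewrite (sum_ord_seq (fun y => if `[< Q P t (sx i) y >] then _ else 0)).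
  rewrite sum_ind (countQ tr (sx_in i)).
  case: asboolP => _; last by rewrite mulr0.
  by rewrite mulrA mulfV ?mul1r // Nr_neq0.
- transitivity (\sum_(m < N) (if `[< Q P t (sx j) (sx m) >] then
     (if `[< Q P u (sx i) (sx j) >] then (Nr n u)%:R^-1 * (Nr n t)%:R^-1 else 0 : R)
     else 0)).
    apply: eq_bigr => m _; rewrite !mxE.
    have -> : `[< Q P t (sx m) (sx j) >] = `[< Q P t (sx j) (sx m) >].
      by apply/idP/idP => /asboolP h; apply/asboolP; exact (Qsym h).
    case: (asboolP (Q P t (sx j) (sx m))) => h; last by rewrite mulr0.
    have E : Q P u (sx i) (sx m) <-> Q P u (sx i) (sx j).
      have hu := Qmono hP tu h.
      split => H; [exact (Qtrans hP H (Qsym hu)) | exact (Qtrans hP H hu)].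
    case: (asboolP (Q P u (sx i) (sx j))) => h2.
      by rewrite asboolT //; apply/E.
    by rewrite asboolF ?mul0r // => /E.
  rewrite (sum_ord_seq (fun y => if `[< Q P t (sx j) y >] then _ else 0)).
  rewrite sum_ind (countQ tr (sx_in j)).
  case: asboolP => _; last by rewrite mulr0.
  by rewrite mulrCA mulfV ?mulr1 // Nr_neq0.
Qed.

Lemma Bmax a b : (a <= r)%N -> (b <= r)%N -> B a *m B b = B (maxn a b).
Proof.
move=> ar br; case: (leqP a b) => ab.
  by apply: (BB _).1; rewrite ab br.
by apply: (BB _).2; rewrite (ltnW ab) ar.
Qed.

Lemma B0 : B 0 = 1%:M.
Proof.
apply/matrixP => i j; rewrite !mxE (Nr0 hP) invr1.
have inj : injective sx by apply/tuple_uniqP.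
case: asboolP => h.
  by have := Q0 hP h => /inj ->; rewrite eqxx.
case: eqP => // ij; exfalso; apply: h; rewrite ij; exact (Qrefl hP _ _).
Qed.

Lemma trB t : \tr (B t) = N%:R * (Nr n t)%:R^-1.
Proof.
rewrite /mxtrace (eq_bigr (fun=> (Nr n t)%:R^-1)).
  by rewrite sumr_const card_ord mulr_natl.
by move=> i _; rewrite mxE asboolT //; exact (Qrefl hP _ _).
Qed.



Definition g := (Nr n r)%:R * (W - ws r).

Lemma Mmat : compr_mx P n p S = \sum_(0 <= t < r) p t *: B t + g *: B r.
Proof.
apply/matrixP => i j; rewrite !mxE.
rewrite (Delta_kdelta (Qtrans hP (Qsym (sx_in i)) (sx_in j))).
rewrite summxE; under [X in _ = X + _]eq_bigr do rewrite !mxE.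
rewrite asboolT; last exact (Qtrans hP (Qsym (sx_in i)) (sx_in j)).
rewrite sumrB /g mulrAC mulfV ?Nr_neq0 // mul1r /ws.
lra.
Qed.



Lemma g_ge : p r <= g.
Proof.
have := ws_le_W r.+1; rewrite /ws big_nat_recr //= -/(ws r) => H.
have -> : p r = (Nr n r)%:R * w r by rewrite /w mulrC divfK ?Nr_neq0.
rewrite /g ler_pM2l ?ltr0n ?(Nr_gt0 hP) //; rewrite /ws in H *; lra.
Qed.

Lemma ps_lt a b : (0 < a)%N -> (a < b)%N -> ps a < ps b.
Proof.
move=> a0 ab; rewrite /ps (big_cat_nat (leq0n a) (ltnW ab)) /= ltrDl.
rewrite big_ltn //; have := ppos a0.
have : 0 <= \sum_(a.+1 <= i < b) p i by apply: sumr_ge0 => t _; apply: p_ge0.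
lra.
Qed.

Definition mu (k : 'I_r.+1) := if (k < r)%N then ps k.+1 else ps r + g.

Lemma mu_inj : injective mu.
Proof.
have mono (k l : 'I_r.+1) : (k < l)%N -> mu k < mu l.
  move=> kl; have kr : (k < r)%N by have := ltn_ord l; lia.
  rewrite /mu kr; case: ifP => lr; first by apply: ps_lt; lia.
  have r0 : (0 < r)%N by lia.
  have h1 : ps k.+1 <= ps r.
    by apply: (sum_nondecr p_ge0); lia.
  have := ppos r0; have := g_ge; lra.
move=> k l E; case: (ltngtP k l) => [kl|lk|/val_inj //].
  by have := mono _ _ kl; rewrite E ltxx.
by have := mono _ _ lk; rewrite E ltxx.
Qed.

Lemma main_formula e (h : R -> R) :
  char_poly (compr_mx P n p S) = \prod_(a <- e) ('X - a%:P) ->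
  (Nr n r)%:R^-1 * \sum_(a <- e) h a =
  \sum_(0 <= k < r) ((Nr n k)%:R^-1 - (Nr n k.+1)%:R^-1) * h (ps k.+1)
  + (Nr n r)%:R^-1 * h (ps r + g).
Proof.
move=> He.
pose Pi := fun k : 'I_r.+1 => if (k < r)%N then B k - B k.+1 else B r.
have N0 : (0 < N)%N by rewrite sizeS (Nr_gt0 hP).
have PiPi : forall k l, Pi k *m Pi l = if k == l then Pi k else 0.
  by move=> k l; apply: orthoB => a b ar br; apply: Bmax.
have sumPi : \sum_k Pi k = 1%:M.
  rewrite big_ord_recr /= /Pi ltnn.
  under eq_bigr => k _ do rewrite /= ltn_ord.
  rewrite -(big_mkord xpredT (fun k => B k - B k.+1)).
  rewrite (@telescope_sumr_eq _ 0 r (fun k => - B k)) //; last first.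
    by move=> k _; rewrite opprK addrC.
  by rewrite opprK -B0 addrAC addNr add0r.
have HM : compr_mx P n p S = \sum_k mu k *: Pi k.
  rewrite Mmat big_ord_recr /= /Pi /mu ltnn.
  under [X in _ = X + _]eq_bigr => k _ do rewrite /= ltn_ord.
  rewrite (@tele_B R N r B p) /ps scalerDl addrA subrK.
  done.
rewrite (spectral_sum' h N0 PiPi sumPi HM mu_inj He).
rewrite big_ord_recr /= /Pi /mu ltnn mulrDr; congr (_ + _).
  rewrite mulr_sumr big_mkord; apply: eq_bigr => k _.
  rewrite /= ltn_ord raddfB /= !trB sizeS -mulrBr mulrA mulrA mulVf ?Nr_neq0 //.
  by rewrite mul1r.
by rewrite trB sizeS mulfV ?Nr_neq0 // mul1r.
Qed.

End Mat2.
End Mat.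

Section Fin.
Variables (X : countType) (P : nat -> set (set X)) (n : nat -> nat).
Hypothesis hP : hierarchical P n.
Hypothesis Xinf : infinite_set [set: X].

Lemma uniq_seqs K : exists s : seq X, uniq s /\ size s = K.
Proof.
elim: K => [|K [s [us ss]]]; first by exists [::].
have [x xs] : exists x, x \notin s.
  apply: contrapT => H; apply: Xinf; apply/finite_seqP; exists s.
  apply/seteqP; split => x // _; apply: contrapT => xs; apply: H.
  by exists x; apply/negP.
by exists (x :: s); rewrite /= xs us ss.
Qed.

Lemma common_rank x (s : seq X) : exists R, forall y, y \in s -> Q P R x y.
Proof.
case: (hP) => _ [_ [_ [_ [_ conn]]]].
elim: s => [|y s [R1 HR1]]; first by exists 0%N.
have [r2 [C [PC [Cx Cy]]]] := conn x y.
exists (maxn R1 r2) => z; rewrite inE => /orP [/eqP ->|zs].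
  by apply: (Qmono hP (leq_maxr R1 r2)); exists C.
by apply: (Qmono hP (leq_maxl R1 r2)); apply: HR1.
Qed.

Lemma N_unbounded K : exists r, (K < Nr n r)%N.
Proof.
have [s [us ss]] := uniq_seqs K.+1.
case: s us ss => [//|x s] us ss.
have [R HR] := common_rank x (x :: s).
exists R; rewrite -ltnS -ss.
have := (card_cluster hP (Qcl hP R x) us).1.
rewrite (_ : count _ _ = size (x :: s)) // -(count_predT (x :: s)).
by apply: eq_in_count => y /HR Qy; apply/asboolP.
Qed.

Lemma Nr_mono a b : (a <= b)%N -> (Nr n a <= Nr n b)%N.
Proof.
move=> /subnK <-; elim: (b - a)%N => [//|k IH]; rewrite addSn NrS.
case: hP => npos _; apply: leq_trans IH _; rewrite leq_pmulr //.
Qed.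

Lemma Ninv0 (R : realType) : (fun r => ((Nr n r)%:R)^-1 : R) @ \oo --> 0.
Proof.
have pos : \forall r \near \oo, 0 < ((Nr n r)%:R : R).
  by exists 0%N => // m _; rewrite ltr0n (Nr_gt0 hP).
apply: (gtr0_cvgV0 pos).2; apply/cvgrnyP/cvgnyPgt => A.
have [r0 hr0] := N_unbounded A.
by exists r0 => // m /= hm; apply: leq_trans hr0 (Nr_mono hm).
Qed.
End Fin.

Unset Implicit Arguments.

Theorem proposition2 (R : realType) (X : countType)
  (P : nat -> set (set X)) (n : nat -> nat) (p : nat -> R) (x0 : X)
  (s : nat -> seq X) (e : nat -> seq R) :
  infinite_set [set: X] ->
  hierarchical P n ->
  p 0%N = 0 -> (forall r, (0 < r)%N -> 0 < p r) ->
  (fun m => \sum_(0 <= r < m) p r) @ \oo --> (1 : R) ->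
  (forall r, uniq (s r) /\ [set x | x \in s r] = Q P r x0) ->
  (forall r, char_poly (compr_mx P n p (s r)) = \prod_(a <- e r) ('X - a%:P)) ->
  forall f : R -> R, continuous f -> (exists M, forall t, `|f t| <= M) ->
    (fun r => ((Nr n r)%:R)^-1 * \sum_(a <- e r) f a) @ \oo -->
      limn (fun m => \sum_(0 <= r < m) ((((Nr n r)%:R)^-1 - ((Nr n r.+1)%:R)^-1)
                         * f (\sum_(0 <= t < r.+1) p t))).
Proof.
move=> Xinf hP p0 ppos psum hs hchar f _ [M fM].
have fle t : f t <= M by have := fM t; rewrite ler_norml => /andP [].
have fge t : - M <= f t by have := fM t; rewrite ler_norml => /andP [].
pose v k := ((Nr n k)%:R : R)^-1 - ((Nr n k.+1)%:R)^-1.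
pose lam k := \sum_(0 <= t < k.+1) p t.
pose T m := \sum_(0 <= k < m) v k * f (lam k).
pose U m := \sum_(0 <= k < m) (v k * f (lam k) + M * v k).
have Ninv := Ninv0 (R:=R) hP Xinf.
have NrR k : ((Nr n k)%:R : R) != 0 by rewrite pnatr_eq0 -lt0n (Nr_gt0 hP).
have sumv m : \sum_(0 <= k < m) v k = 1 - ((Nr n m)%:R)^-1.
  rewrite (@telescope_sumr_eq _ 0 m (fun k => - ((Nr n k)%:R : R)^-1)) //.
    by rewrite (Nr0 hP) invr1 opprK addrC.
  by move=> k _; rewrite /v opprK addrC.
have v_ge0 k : 0 <= v k.
  rewrite /v subr_ge0 lef_pV2 ?posrE ?ltr0n ?(Nr_gt0 hP) // ler_nat NrS.
  by case: hP => npos _; rewrite leq_pmulr.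
have Uge m : 0 <= v m * f (lam m) + M * v m.
  rewrite [M * _]mulrC -mulrDr mulr_ge0 //; have := fge (lam m); lra.
have UT m : U m = T m + M * (1 - ((Nr n m)%:R)^-1).
  by rewrite /U big_split /= -mulr_sumr sumv.
have cvgU : cvgn U.
  apply: nondecreasing_is_cvgn; first exact: sum_nondecr.
  exists (2 * M) => _ [m _ <-].
  have M0 : 0 <= M by apply: le_trans (fM 0); exact: normr_ge0.
  apply: (@le_trans _ _ (\sum_(0 <= k < m) 2 * M * v k)).
    apply: ler_sum => k _; have := fle (lam k); have := v_ge0 k; nra.
  rewrite -mulr_sumr sumv.
  have : 0 <= ((Nr n m)%:R : R)^-1 by rewrite invr_ge0.
  nra.
have cvgUM : (fun m => U m - M * (1 - ((Nr n m)%:R)^-1)) @ \oo --> limn U - M.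
  rewrite -[X in _ --> X](_ : limn U - M * (1 - 0) = _); last by rewrite subr0 mulr1.
  apply: cvgB => //; apply: cvgM => //; [exact: cvg_cst | apply: cvgB => //; exact: cvg_cst].
have limT : limn T = limn U - M.
  apply: cvg_lim; first exact: norm_hausdorff.
  suff -> : T = (fun m => U m - M * (1 - ((Nr n m)%:R)^-1)) by [].
  by apply: funext => m; rewrite UT addrK.
have form r := main_formula hP p0 ppos psum (hs r).1 (hs r).2 f (hchar r).
rewrite limT.
have -> : (fun r => ((Nr n r)%:R)^-1 * \sum_(a <- e r) f a) =
   (fun r => (U r - M * (1 - ((Nr n r)%:R)^-1)) +
      ((Nr n r)%:R)^-1 * f (ps p r + g n p r)).
  by apply: funext => r; rewrite form UT addrK.
rewrite -[limn U - M]addr0; apply: cvgD => //.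
have h1 : (fun r => M * ((Nr n r)%:R)^-1) @ \oo --> (0:R).
  rewrite -(mulr0 M); apply: cvgM => //; exact: cvg_cst.
have h2 : (fun r => - (M * ((Nr n r)%:R)^-1)) @ \oo --> (0:R).
  by rewrite -oppr0; apply: cvgN.
apply: (squeeze_cvgr _ h2 h1); exists 0%N => // r _ /=.
have : 0 <= ((Nr n r)%:R : R)^-1 by rewrite invr_ge0.
have := fle (ps p r + g n p r); have := fge (ps p r + g n p r).
move=> a b c; apply/andP; split; nra.
Qed.
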